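(* Let $d\ge1$ and $C\subset\mathbb R^d$ an adapted cone, and set $a=\mathbb P(\xi_1\in C)^{-1}$. If $\mathbb E\big(\Vert\xi_1\Vert^2a^{\Vert\xi_1\Vert^2}\big)<\infty$, then $\mathbb P(T_C>n)\ge a^{-n}$ for all $n$, and $\mathbb P\big(\max_{1\le i\le n}\Vert\xi_i\Vert>\sqrt n\,\big|\,T_C>n\big)\to0$ as $n\to\infty$.
   Context: $(\xi_n)_{n\ge1}$ i.i.d. random vectors in $\mathbb R^d$ with mean zero and covariance $\sigma^2I_d$, $\sigma^2>0$; $S_n=\xi_1+\cdots+\xi_n$. A linear cone $C$ ($\lambda C=C$ for all $\lambda>0$) is adapted if convex, with non-empty interior, and $\mathbb P(\xi_1\in C\setminus\{0\})>0$. $T_C=\inf\{n\ge1:S_n\notin C\}$. *)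

(* Defs.v *)
From HB Require Import structures.
From mathcomp Require Import all_boot all_order all_algebra.
From mathcomp Require Import all_classical all_reals all_analysis.
Set Implicit Arguments. Unset Strict Implicit. Unset Printing Implicit Defensive.
Import Order.TTheory GRing.Theory Num.Theory.
Import numFieldNormedType.Exports.
Local Open Scope classical_set_scope.
Local Open Scope ring_scope.

(* Vectors of R^d are row vectors 'rV[R]_d, with the product (= Euclidean) topology. *)

Definition enorm (R : realType) (d : nat) (v : 'rV[R]_d) : R :=
  Num.sqrt (\sum_(j < d) v 0 j ^+ 2).

Definition borel_rV (R : realType) (d : nat) : set (set 'rV[R]_d) :=
  <<s [set A : set 'rV[R]_d | open A] >>.

Definition random_vector (dT : measure_display) (T : measurableType dT)
  (R : realType) (d : nat) (X : T -> 'rV[R]_d) : Prop :=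
  forall B, borel_rV B -> measurable (X @^-1` B).

Definition independent_vectors (dT : measure_display) (T : measurableType dT)
  (R : realType) (d : nat) (P : probability T R) (X : nat -> T -> 'rV[R]_d) : Prop :=
  forall (s : seq nat) (B : nat -> set 'rV[R]_d),
    uniq s -> (forall i, borel_rV (B i)) ->
    P (\big[setI/setT]_(i <- s) (X i @^-1` B i)) =
    (\prod_(i <- s) P (X i @^-1` B i))%E.

Definition identically_distributed (dT : measure_display) (T : measurableType dT)
  (R : realType) (d : nat) (P : probability T R) (X : nat -> T -> 'rV[R]_d) : Prop :=
  forall n B, borel_rV B -> P (X n @^-1` B) = P (X 0%N @^-1` B).

Definition linear_cone (R : realType) (d : nat) (C : set 'rV[R]_d) : Prop :=
  forall l : R, 0 < l -> [set l *: x | x in C] = C.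

Definition convex_set_rV (R : realType) (d : nat) (C : set 'rV[R]_d) : Prop :=
  forall x y (t : R), C x -> C y -> 0 <= t -> t <= 1 -> C (t *: x + (1 - t) *: y).

Definition adapted_cone (dT : measure_display) (T : measurableType dT)
  (R : realType) (d : nat) (P : probability T R) (xi1 : T -> 'rV[R]_d)
  (C : set 'rV[R]_d) : Prop :=
  [/\ linear_cone C, convex_set_rV C, interior C !=set0 &
      (0 < P (xi1 @^-1` (C `\ (0%R : 'rV[R]_d))))%E].

(* S_n = xi_1 + ... + xi_n, where xi_{i+1} is represented by xi i *)
Definition partial_sum (T : Type) (R : realType) (d : nat)
  (xi : nat -> T -> 'rV[R]_d) (n : nat) (w : T) : 'rV[R]_d :=
  \sum_(i < n) xi i w.

(* The event {T_C > n} = {S_1, ..., S_n all in C} *)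
Definition exit_after (T : Type) (R : realType) (d : nat)
  (xi : nat -> T -> 'rV[R]_d) (C : set 'rV[R]_d) (n : nat) : set T :=
  [set w | forall k, (1 <= k <= n)%N -> C (partial_sum xi k w)].

Definition big_jump (T : Type) (R : realType) (d : nat)
  (xi : nat -> T -> 'rV[R]_d) (n : nat) : set T :=
  [set w | exists i : 'I_n, Num.sqrt (n%:R) < enorm (xi i w)].

(* Main.v *)
Require Import Defs.
From HB Require Import structures.
From mathcomp Require Import all_boot all_order all_algebra.
From mathcomp Require Import all_classical all_reals all_analysis.
From mathcomp Require Import lra ring.
Import Order.TTheory GRing.Theory Num.Theory.
Import numFieldNormedType.Exports.
Local Open Scope classical_set_scope.
Local Open Scope ring_scope.

Lemma open_borel (R : realType) d (U : set 'rV[R]_d) : open U -> borel_rV U.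
Proof. by move=> oU; apply: sub_gen_smallest. Qed.

Lemma rv_coord (R : realType) (dT : measure_display) (T : measurableType dT) d
  (X : T -> 'rV[R]_d) (j : 'I_d) :
  random_vector X -> measurable_fun setT (fun w => X w 0 j).
Proof.
move=> rX; apply: (@measurability _ _ _ R setT _ (measurable_realfun.RGenOpens.G (R:=R))).
  exact: measurable_realfun.RGenOpens.measurableE.
move=> _ [_ [x [y ->]] <-]; rewrite setTI.
apply: (rX ((fun M : 'rV[R]_d => M 0 j) @^-1` `]x, y[%classic)); apply: open_borel.
apply: (@open_comp _ _ (fun M : 'rV[R]_d => M 0 j)).
  by move=> M _; apply: coord_continuous.
exact: itv_open.
Qed.

Lemma ball_rV (R : realType) d (v w : 'rV[R]_d) (e : R) :
  0 < e -> (forall j : 'I_d, `|v 0 j - w 0 j| < e) -> ball v e w.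
Proof.
move=> e0 H; split => // i j; rewrite (ord1 i).
by rewrite /ball /=; exact: H.
Qed.

Definition rbox (R : realType) {d} (i : 'rV[rat]_d * rat) : set 'rV[R]_d :=
  [set v | forall j : 'I_d, ratr (i.1 0 j) - ratr i.2 < v 0 j < ratr (i.1 0 j) + ratr i.2].

Lemma box_meas (R : realType) (dT : measure_display) (T : measurableType dT) d
  (F : T -> 'rV[R]_d) (i : 'rV[rat]_d * rat) :
  (forall j, measurable_fun setT (fun w => F w 0 j)) ->
  measurable (F @^-1` rbox R i).
Proof.
move=> mF.
have -> : F @^-1` rbox R i = \bigcap_(j in [set: 'I_d])
   ((fun w => F w 0 j) @^-1`
      `]ratr (i.1 0 j) - ratr i.2, ratr (i.1 0 j) + ratr i.2[%classic).
  apply/seteqP; split => w /=.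
    move=> H j _ /=; rewrite in_itv /=; exact: H.
  move=> H j; have := H j I; rewrite /= in_itv /=; exact.
apply: fin_bigcap_measurable; first exact: finite_finset.
move=> j _; have h := mF j measurableT _ (measurable_itv `]ratr (i.1 0 j) - ratr i.2, ratr (i.1 0 j) + ratr i.2[).
by rewrite setTI in h.
Qed.

Lemma coords_open (R : realType) (dT : measure_display) (T : measurableType dT) d
  (F : T -> 'rV[R]_d) (U : set 'rV[R]_d) :
  (forall j, measurable_fun setT (fun w => F w 0 j)) -> open U ->
  measurable (F @^-1` U).
Proof.
move=> mF oU.
pose G n := [set w | exists i : 'rV[rat]_d * rat,
  [/\ pickle i = n, rbox R i `<=` U & rbox R i (F w)]].
have -> : F @^-1` U = \bigcup_n G n.
  apply/seteqP; split => w /=; last first.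
    by move=> [n _ [i [_ iU iw]]]; exact: iU.
  move=> Uw.
  have := oU _ Uw; rewrite /interior /= => /nbhs_ballP [e e0 eU].
  have e20 : 0 < e / 2 by rewrite divr_gt0.
  have [r] := rat_in_itvoo e20; rewrite in_itv /= => /andP [r0 re].
  have [qf Hqf] : {qf : 'I_d -> rat & forall j,
      ratr (qf j) \in `]F w 0 j - ratr r, F w 0 j + ratr r[}.
    apply: (@choice 'I_d rat (fun j q => ratr q \in `]F w 0 j - ratr r, F w 0 j + ratr r[)) => j.
    have [|q hq] := @rat_in_itvoo R (F w 0 j - ratr r) (F w 0 j + ratr r).
      by rewrite ltrBlDr -addrA ltrDl addr_gt0.
    by exists q.
  exists (pickle (\row_j qf j, r)) => //.
  exists (\row_j qf j, r); split => //.
    move=> v /= vb; apply: eU; apply: ball_rV => [//|j].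
    have := vb j; have := Hqf j; rewrite mxE in_itv /= => /andP [h1 h2] /andP [h3 h4].
    rewrite ltr_norml; apply/andP; split; lra.
  move=> j /=; have := Hqf j; rewrite mxE in_itv /= => /andP [h1 h2].
  apply/andP; split; lra.
apply: bigcupT_measurable => n.
case: (pselect (exists i : 'rV[rat]_d * rat, pickle i = n /\ rbox R i `<=` U)).
  move=> [i [pin iU]].
  have -> : G n = F @^-1` rbox R i.
    apply/seteqP; split => w /=.
      by move=> [i' [pi' _ iw]]; have <- : i' = i by apply: (pcan_inj pickleK); rewrite pi' pin.
    by move=> iw; exists i.
  exact: box_meas.
move=> nex; have -> : G n = set0.
  by apply/seteqP; split => w //= [i [pi iU _]]; apply: nex; exists i.
exact: measurable0.
Qed.

Lemma coords_rv (R : realType) (dT : measure_display) (T : measurableType dT) d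
  (F : T -> 'rV[R]_d) :
  (forall j, measurable_fun setT (fun w => F w 0 j)) -> random_vector F.
Proof.
move=> mF B hB.
suff : <<s [set A : set 'rV[R]_d | open A] >> `<=` [set B | measurable (F @^-1` B)].
  by apply.
apply: smallest_sub; last by move=> A oA; exact: coords_open.
split.
- by rewrite /= preimage_set0.
- by move=> A mA; rewrite /= setTD preimage_setC; exact: measurableC.
- by move=> A mA; rewrite /= preimage_bigcup; exact: bigcupT_measurable.
Qed.

Lemma partial_sum_rv (R : realType) (dT : measure_display) (T : measurableType dT) d
  (xi : nat -> T -> 'rV[R]_d) k :
  (forall n, random_vector (xi n)) -> random_vector (partial_sum xi k).
Proof.
move=> rX; apply: coords_rv => j.
have -> : (fun w => partial_sum xi k w 0 j) = (fun w => \sum_(i < k) xi i w 0 j).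
  by apply: funext => w; rewrite /partial_sum summxE.
elim: k => [|k IH].
  under eq_fun do rewrite big_ord0; exact: measurable_cst.
under eq_fun do rewrite big_ord_recr /=.
exact: (measurable_realfun.measurable_funD IH (@rv_coord _ _ _ _ _ j (rX k))).
Qed.

Lemma enorm_cont (R : realType) d : continuous (@enorm R d).
Proof.
have H : forall s : seq 'I_d, continuous (fun v : 'rV[R]_d => \sum_(j <- s) v 0 j ^+ 2).
  elim => [|j s IH].
    under eq_fun do rewrite big_nil; move=> v; exact: cst_continuous.
  under eq_fun do rewrite big_cons.
  move=> v; apply: (@continuousD _ _ _ (fun v : 'rV[R]_d => v 0 j ^+ 2)
     (fun v : 'rV[R]_d => \sum_(j0 <- s) v 0 j0 ^+ 2)); last exact: IH.
  apply: (@continuousM _ _ (fun v : 'rV[R]_d => v 0 j) (fun v : 'rV[R]_d => v 0 j));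
    exact: coord_continuous.
move=> v; apply: continuous_comp; first exact: (H (index_enum _)).
exact: sqrt_continuous.
Qed.

Lemma cone_add (R : realType) d (C : set 'rV[R]_d) :
  linear_cone C -> convex_set_rV C -> forall x y, C x -> C y -> C (x + y).
Proof.
move=> lc cv x y Cx Cy.
have h := cv x y (1/2) Cx Cy.
have h1 : (0 : R) <= 1/2 by lra.
have h2 : (1/2 : R) <= 1 by lra.
have := h h1 h2.
have -> : (1 - 1/2 : R) = 1/2 by field.
move=> hz.
have two0 : (0 : R) < 2 by lra.
rewrite -(lc 2 two0); exists ((1/2) *: x + (1/2) *: y) => //.
rewrite scalerDr !scalerA.
have -> : (2 : R) * (1/2) = 1 by field.
by rewrite !scale1r.
Qed.

Lemma psum_in_C (R : realType) (T : Type) d (C : set 'rV[R]_d)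
  (xi : nat -> T -> 'rV[R]_d) w n :
  linear_cone C -> convex_set_rV C ->
  (forall i, (i < n)%N -> C (xi i w)) ->
  forall k, (1 <= k <= n)%N -> C (partial_sum xi k w).
Proof.
move=> lc cv H; elim => // k IH /andP [_ kn].
rewrite /partial_sum big_ord_recr /=.
case: (posnP k) => [k0|kp].
  by subst k; rewrite big_ord0 add0r; apply: H.
apply: cone_add => //; last exact: H.
by apply: IH; rewrite kp /= ltnW.
Qed.

Lemma in_bigsetI (T : Type) (s : seq nat) (F : nat -> set T) w :
  (\big[setI/setT]_(i <- s) F i) w -> forall i, i \in s -> F i w.
Proof.
elim: s => [|j s IH] //.
rewrite big_cons => -[Fj Fs] i; rewrite in_cons => /orP [/eqP -> //|].
exact: IH.
Qed.

Lemma subadd_fin (dT : measure_display) (T : measurableType dT) (R : realType)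
  (P : probability T R) (F : nat -> set T) n :
  (forall i, measurable (F i)) ->
  (P (\big[setU/set0]_(i < n) F i) <= \sum_(i < n) P (F i))%E.
Proof.
move=> mF; elim: n => [|n IH]; first by rewrite !big_ord0 measure0.
rewrite !big_ord_recr /=.
apply: le_trans (measureU2 _ _ _) _.
- by apply: bigsetU_measurable => i _.
- exact: mF.
- exact: leeD.
Qed.

Theorem mainTheorem10 (R : realType) (dT : measure_display) (T : measurableType dT)
  (P : probability T R) (d : nat) (xi : nat -> T -> 'rV[R]_d) (sigma2 : R)
  (C : set 'rV[R]_d) :
  (1 <= d)%N ->
  (forall n, random_vector (xi n)) ->
  independent_vectors P xi ->
  identically_distributed P xi ->
  (forall j : 'I_d, P.-integrable setT (fun w => (xi 0%N w 0 j)%:E)) ->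
  (forall j : 'I_d, (\int[P]_w (xi 0%N w 0 j)%:E = 0)%E) ->
  0 < sigma2 ->
  (forall j k : 'I_d, P.-integrable setT (fun w => (xi 0%N w 0 j * xi 0%N w 0 k)%:E)) ->
  (forall j k : 'I_d,
     (\int[P]_w (xi 0%N w 0 j * xi 0%N w 0 k)%:E = (if j == k then sigma2 else 0)%:E)%E) ->
  borel_rV C ->
  adapted_cone P (xi 0%N) C ->
  let a := (fine (P (xi 0%N @^-1` C)))^-1 in
  (\int[P]_w (enorm (xi 0%N w) ^+ 2 * a `^ (enorm (xi 0%N w) ^+ 2))%:E < +oo)%E ->
  (forall n : nat, ((a ^- n)%:E <= P (exit_after xi C n))%E) /\
  ((fun n : nat => fine (P (big_jump xi n `&` exit_after xi C n))
                   / fine (P (exit_after xi C n))) @ \oo --> 0).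
Proof.
move=> d1 rX indep ident _ _ _ _ _ bC [lc cv _ pos] a fint.
have mC := rX 0%N C bC.
have mC0 : measurable (xi 0%N @^-1` (C `\ (0 : 'rV[R]_d))).
  have -> : xi 0%N @^-1` (C `\ (0 : 'rV[R]_d)) =
            xi 0%N @^-1` C `&` xi 0%N @^-1` (~` [set (0 : 'rV[R]_d)]).
    by apply/seteqP; split => w /= [].
  apply: measurableI => //; apply: rX; apply: open_borel; apply: closed_openC.
  by apply: accessible_closed_set1; apply: hausdorff_accessible; exact: norm_hausdorff.
pose p := fine (P (xi 0%N @^-1` C)).
have Pfin : P (xi 0%N @^-1` C) = p%:E by rewrite fineK // fin_num_measure.
have p0 : 0 < p.
  rewrite -lte_fin -Pfin; apply: (lt_le_trans pos).
  by apply: le_measure; rewrite ?inE // => w /= [].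
have p1 : p <= 1 by rewrite -lee_fin -Pfin; exact: probability_le1.
have aE : forall n, a ^- n = p ^+ n by move=> n; rewrite /a exprVn invrK.
have mE : forall n, measurable (exit_after xi C n).
  move=> n; have -> : exit_after xi C n =
     \bigcap_(k in [set k | (1 <= k <= n)%N]) (partial_sum xi k @^-1` C) by [].
  by apply: bigcap_measurableType => k _; exact: partial_sum_rv.
have part1 : forall n, ((p ^+ n)%:E <= P (exit_after xi C n))%E.
  move=> n.
  have hI := indep (index_iota 0 n) (fun=> C) (iota_uniq 0 (n - 0)) (fun=> bC).
  have : P (\big[setI/setT]_(i <- index_iota 0 n) xi i @^-1` C) = (p ^+ n)%:E.
    rewrite hI (eq_bigr (fun=> p%:E)); last by move=> i _; rewrite ident // Pfin.
    by rewrite prodEFin prodr_const_nat subn0.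
  move=> <-; apply: le_measure; rewrite ?inE.
  - by apply: bigsetI_measurable => i _; exact: rX.
  - exact: mE.
  - move=> w Hw k hk; apply: (@psum_in_C _ _ _ C xi w n lc cv _ k hk).
    by move=> i ilt; apply: (@in_bigsetI T (index_iota 0 n) (fun i => xi i @^-1` C) w Hw i); rewrite mem_index_iota.
split; first by move=> n; rewrite aE; exact: part1.

have a1 : 1 <= a by rewrite /a invf_ge1.
have a0 : 0 <= a by apply: le_trans a1.
pose g w := enorm (xi 0%N w) ^+ 2 * a `^ (enorm (xi 0%N w) ^+ 2).
have g0 : forall w, 0 <= g w.
  by move=> w; rewrite /g mulr_ge0 ?sqr_ge0 ?powR_ge0.
have mnorm : measurable_fun setT (fun w => enorm (xi 0%N w)).
  apply: (@measurability _ _ _ R setT _ (measurable_realfun.RGenOpens.G (R:=R))).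
    exact: measurable_realfun.RGenOpens.measurableE.
  move=> _ [_ [x [y ->]] <-]; rewrite setTI.
  apply: (rX 0%N ((@enorm R d) @^-1` `]x, y[%classic)); apply: open_borel.
  apply: open_comp; [by move=> v _; exact: enorm_cont | exact: itv_open].
have mg : measurable_fun setT g.
  apply: (@measurableT_comp _ _ _ _ _ _ (fun t : R => t ^+ 2 * a `^ (t ^+ 2)) _
            (fun w => enorm (xi 0%N w))) => //.
  apply: measurable_realfun.measurable_funM.
    exact: (measurable_realfun.measurable_funX 2 (@measurable_id _ R setT)).
  apply: (@measurableT_comp _ _ _ _ _ _ (powR a) _ (fun t : R => t ^+ 2)).
    exact: measurable_realfun.measurable_powRr.
  exact: (measurable_realfun.measurable_funX 2 (@measurable_id _ R setT)).
pose f : T -> measurable_realfun.constructive_ereal_extended__canonical__measurable_structure_SigmaRing R := fun w => (g w)%:E.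
have mf : measurable_fun setT f := (measurable_realfun.measurable_EFinP setT g).2 mg.
have f0 : forall w, (0 <= f w)%E by move=> w; rewrite lee_fin.
pose B n := [set v : 'rV[R]_d | Num.sqrt (n%:R) < enorm v].
have bB : forall n, borel_rV (B n).
  move=> n; apply: open_borel.
  apply: (@open_comp _ _ (@enorm R d) [set x | Num.sqrt n%:R < x]).
    by move=> v _; exact: enorm_cont.
  exact: open_gt.
pose A n := xi 0%N @^-1` B n.
have mA : forall n, measurable (A n) by move=> n; exact: rX.
pose I n := (\int[P]_(w in A n) f w)%E.
have I0 : forall n, (0 <= I n)%E by move=> n; apply: integral_ge0 => w _; exact: f0.
have Ifin : forall n, I n \is a fin_num.
  move=> n; rewrite ge0_fin_numE //; apply: le_lt_trans fint.
  by apply: ge0_subset_integral => // w _; exact: f0.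

have mBJ : forall n, big_jump xi n = \big[setU/set0]_(i < n) (xi i @^-1` B n).
  move=> n; rewrite -(bigcup_mkord n (fun i => xi i @^-1` B n)); apply/seteqP; split => w /=.
    by move=> [i Hi]; exists i => //=.
  by move=> [i /= ilt Hi]; exists (Ordinal ilt).
have key : forall n, fine (P (big_jump xi n `&` exit_after xi C n))
                       / fine (P (exit_after xi C n)) <= fine (I n).
  move=> n.
  have mBJn : measurable (big_jump xi n).
    by rewrite mBJ; apply: bigsetU_measurable => i _; exact: rX.
  have mBE : measurable (big_jump xi n `&` exit_after xi C n) by exact: measurableI.
  set PB := P (big_jump xi n `&` exit_after xi C n).
  have h1 : (PB <= (fine (P (A n)) *+ n)%:E)%E.
    apply: (@le_trans _ _ (P (big_jump xi n))).
      by apply: le_measure; rewrite ?inE //; apply: subIsetl.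
    rewrite mBJ; apply: (@le_trans _ _ (\sum_(i < n) P (xi i @^-1` B n))).
      exact: (@subadd_fin _ _ _ P (fun i => xi i @^-1` B n) n (fun i => rX i _ (bB n))).
    rewrite (eq_bigr (fun=> (fine (P (A n)))%:E)); last first.
      by move=> i _; rewrite ident // fineK // fin_num_measure.
    by rewrite sumEFin sumr_const card_ord.
  have h2 : (((n%:R * a ^+ n) * fine (P (A n)))%:E <= I n)%E.
    rewrite EFinM fineK ?fin_num_measure //.
    rewrite -integral_cst //; apply: ge0_le_integral => //.
    - by move=> w _; rewrite lee_fin mulr_ge0 // exprn_ge0.
    - exact: measurable_funS mf.
    - move=> w Aw; rewrite /f /g lee_fin.
      set e := enorm (xi 0%N w).
      have e0 : 0 <= e by rewrite /e /enorm sqrtr_ge0.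
      have s0 : 0 <= Num.sqrt (n%:R : R) by rewrite sqrtr_ge0.
      have sn : Num.sqrt (n%:R : R) ^+ 2 = n%:R by rewrite sqr_sqrtr.
      have ne : n%:R <= e ^+ 2.
        have Aw' : Num.sqrt (n%:R : R) < e := Aw.
        rewrite -sn; nra.
      apply: ler_pM => //; first by rewrite exprn_ge0.
      by rewrite -(@powR_mulrn _ a n a0); exact: (ler_powR a1 ne).
  have PEge : p ^+ n <= fine (P (exit_after xi C n)).
    by rewrite -lee_fin fineK ?fin_num_measure //; exact: part1.
  have pn0 : 0 < p ^+ n := exprn_gt0 n p0.
  have PB0 : 0 <= fine PB by apply: fine_ge0; exact: measure_ge0.
  have PB' : fine PB <= fine (P (A n)) *+ n.
    by rewrite -lee_fin fineK ?fin_num_measure.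
  apply: (@le_trans _ _ (fine PB * a ^+ n)).
    rewrite ler_wpM2l // /a exprVn lef_pV2 ?posrE //.
    exact: lt_le_trans PEge.
  apply: (@le_trans _ _ ((n%:R * a ^+ n) * fine (P (A n)))); last first.
    by rewrite -lee_fin fineK.
  have an0 : 0 <= a ^+ n by rewrite exprn_ge0.
  apply: le_trans (ler_wpM2r an0 PB') _.
  by rewrite -mulr_natl le_eqVlt; apply/orP; left; apply/eqP; ring.

have Icvg : (fun n => fine (I n)) @ \oo --> 0.
  pose fn n : T -> measurable_realfun.constructive_ereal_extended__canonical__measurable_structure_SigmaRing R := f \_ (A n).
  have eI : forall n, I n = (\int[P]_w fn n w)%E.
    by move=> n; rewrite /I integral_mkcond.
  have mfn : forall n, measurable_fun setT (fn n).
    move=> n.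
    have -> : fn n = EFin \o (g \_ (A n)).
      by apply: funext => w; rewrite /fn /patch /=; case: ifP.
    apply: (measurable_realfun.measurable_EFinP setT _).2.
    exact: ((measurable_restrictT g (mA n)).1
      (measurable_funS measurableT (@subsetT _ (A n)) mg)).
  have ig : P.-integrable setT f.
    apply/integrableP; split => //.
    under eq_integral do rewrite gee0_abs //.
    exact: fint.
  have ff : \forall x \ae P, setT x -> fn n x @[n --> \oo] --> cst 0%E x.
    apply: aeW => w _.
    set e := enorm (xi 0%N w).
    have e0 : 0 <= e by rewrite /e /enorm sqrtr_ge0.
    apply: cvg_near_cst.
    exists (Num.trunc (e ^+ 2)).+1 => // m /= Nm.
    have nA : ~ (A m w).
      move=> Aw; have : Num.sqrt (m%:R : R) < e := Aw.
      apply/negP; rewrite -leNgt.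
      rewrite -(ger0_norm e0) -sqrtr_sqr ler_sqrt //.
      apply: ltW; apply: lt_le_trans (truncnS_gt _) _.
      by rewrite ler_nat.
    by rewrite /fn /patch memNset.
  have fg : \forall x \ae P, forall n, setT x -> (`|fn n x| <= f x)%E.
    apply: aeW => w n _; rewrite /fn /patch; case: ifP => _.
      by rewrite gee0_abs.
    by rewrite abse0.
  have [_ _ hc] := @dominated_convergence _ _ _ P setT measurableT fn (cst 0%E) f
    mfn (measurable_cst _) ff ig fg.
  rewrite integral0 in hc.
  have -> : (fun n => fine (I n)) = (fun n => fine (\int[P]_w fn n w)%E).
    by apply: funext => n; rewrite eI.
  exact: (fine_cvg hc).
apply: (@squeeze_cvgr _ _ _ _ (fun=> 0) (fun n => fine (I n))).
- apply: nearW => n; apply/andP; split; last exact: key.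
  by rewrite divr_ge0 // fine_ge0 // measure_ge0.
- exact: cvg_cst.
- exact: Icvg.
Qed.
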